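(* Let $\mathbf{S}$ be a $k$-safety hyperproperty over a finite alphabet $\Sigma$, let $\mathcal{O} = (S,E,\Delta)$ be an observation table for $\mathbf{S}$ over the alphabet $\Sigma^{k'}$ for some $k' \in \mathbb{N}$, and let $k'' > k'$. Let $\mathcal{O}' = (S',E',\Delta')$ be the observation table over $\Sigma^{k''}$ with $S' = \{\epsilon\} \cup \{\mathrm{extend}(s,k'') \mid s \in S\}$, $E' = \{\epsilon\} \cup \{\mathrm{extend}(e,k'') \mid e \in E\}$, and $\Delta'$ defined on $(S' \cup S'\cdot\Sigma^{k''})\cdot E'$ by membership (i.e., $\Delta'(w) = 1$ iff $\mathrm{unzip}(w) \in \mathrm{Bad}(\mathbf{S})$). Then $|\mathrm{row}(S)| = |\mathrm{row}(S')|$.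
   Context: For a finite set $T \subseteq \Sigma^*$ and $T' \subseteq \Sigma^\omega$, write $T \le T'$ if every $t \in T$ is a prefix of some $t' \in T'$. For a hyperproperty $\mathbf{S} \subseteq \mathcal{P}(\Sigma^\omega)$, $\mathrm{Bad}(\mathbf{S}) = \{T \subseteq \Sigma^* \text{ finite} \mid \forall T' \subseteq \Sigma^\omega.\ T \le T' \Rightarrow T' \notin \mathbf{S}\}$; $\mathbf{S}$ is $k$-safety if every $T' \notin \mathbf{S}$ has some $T \in \mathrm{Bad}(\mathbf{S})$ with $|T| \le k$ and $T \le T'$. For $\sigma = v_0 \cdots v_m \in (\Sigma^{n})^*$, $\mathrm{unzip}(\sigma)$ is the set of the $n$ component words $v_0[i]\cdots v_m[i]$. An observation table for $\mathbf{S}$ over $\Sigma^n$ is a triple $(S,E,\Delta)$ where $S \subseteq (\Sigma^n)^*$ is a nonempty finite prefix-closed set, $E \subseteq (\Sigma^n)^*$ is a nonempty finite suffix-closed set, and $\Delta : (S \cup S\cdot\Sigma^n)\cdot E \to \{0,1\}$ with $\Delta(w) = 1$ iff $\mathrm{unzip}(w) \in \mathrm{Bad}(\mathbf{S})$. For $s \in S \cup S\cdot \Sigma^n$, $\mathrm{row}(s): E \to \{0,1\}$ is $\mathrm{row}(s)(e) = \Delta(s\cdot e)$, and $\mathrm{row}(S) = \{\mathrm{row}(s) \mid s \in S\}$. For a letter $(a_1,\dots,a_{k'}) \in \Sigma^{k'}$ and $k'' > k'$, $\mathrm{extend}((a_1,\dots,a_{k'}),k'') = (a_1,\dots,a_{k'},a_{k'},\dots,a_{k'})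 \in \Sigma^{k''}$ (the last component repeated), extended letterwise to words. *)

(* Defs.v *)
From mathcomp Require Import all_boot.
Set Implicit Arguments. Unset Strict Implicit. Unset Printing Implicit Defensive.

Section Defs.
Variable Sigma : finType.

Definition fword := seq Sigma.
Definition iword := nat -> Sigma.
Definition hyperprop := (iword -> Prop) -> Prop.

Definition iprefix (t : fword) (t' : iword) : Prop := t = mkseq t' (size t).

(* T <= T' for a finite set T (given as a list, membership semantics) *)
Definition le_sets (T : seq fword) (T' : iword -> Prop) : Prop :=
  forall t, t \in T -> exists t', T' t' /\ iprefix t t'.

Definition Bad (HS : hyperprop) (T : seq fword) : Prop :=
  forall T' : iword -> Prop, le_sets T T' -> ~ HS T'.

(* k-safety; |T| <= k with T a duplicate-free list *)
Definition k_safety (k : nat) (HS : hyperprop) : Prop :=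
  forall T' : iword -> Prop, ~ HS T' ->
    exists T : seq fword, [/\ uniq T, size T <= k, Bad HS T & le_sets T T'].

(* A letter of Sigma^n is represented by a list of length n;
   a word over Sigma^n is a list of such letters. *)
Definition letter := seq Sigma.
Definition nword := seq letter.
Definition is_letter (n : nat) (a : letter) : bool := size a == n.
Definition is_nword (n : nat) (w : nword) : bool := all (is_letter n) w.

(* unzip: the set (as a list) of the n component words *)
Definition component (w : nword) (i : nat) : fword := pmap (fun v => onth v i) w.
Definition unzip (n : nat) (w : nword) : seq fword := [seq component w i | i <- iota 0 n].

Definition extend (m : nat) (a : letter) : letter :=
  match a with
  | [::] => [::]
  | x :: s => a ++ nseq (m - size a) (last x s)
  end.
Definition extend_word (m : nat) (w : nword) : nword := map (extend m) w.

Definition obs_table_struct (n : nat) (S E : seq nword) : Prop :=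
  [/\ S != [::], all (is_nword n) S & (forall s i, s \in S -> take i s \in S)] /\
  [/\ E != [::], all (is_nword n) E & (forall e i, e \in E -> drop i e \in E)].

Definition delta_def (HS : hyperprop) (n : nat) (S E : seq nword) (Delta : nword -> bool) : Prop :=
  (forall s e, s \in S -> e \in E -> (Delta (s ++ e) <-> Bad HS (unzip n (s ++ e)))) /\
  (forall s a e, s \in S -> is_letter n a -> e \in E ->
      (Delta (s ++ a :: e) <-> Bad HS (unzip n (s ++ a :: e)))).

Definition obs_table (HS : hyperprop) (n : nat) (S E : seq nword) (Delta : nword -> bool) : Prop :=
  obs_table_struct n S E /\ delta_def HS n S E Delta.

(* row(s) : E -> {0,1}, represented by its graph listed along E *)
Definition row (Delta : nword -> bool) (E : seq nword) (s : nword) : seq bool :=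
  [seq Delta (s ++ e) | e <- E].

Definition card_rows (Delta : nword -> bool) (S E : seq nword) : nat :=
  size (undup [seq row Delta E s | s <- S]).

End Defs.

(* Main.v *)
Require Import Defs.
From mathcomp Require Import all_boot.
Set Implicit Arguments. Unset Strict Implicit.

Section L.
Variable Sigma : finType.
Variables k' k'' : nat.
Hypothesis k'0 : 0 < k'.
Hypothesis k'k : k' < k''.

Lemma onth_ext (a : letter Sigma) i : size a = k' -> i < k'' ->
  onth (extend k'' a) i = onth a (minn i k'.-1).
Proof.
case: a => [|x s] ha hi; first by move: k'0; rewrite -ha.
rewrite /extend onth_cat ha.
case: ltnP => hik.
  by rewrite (minn_idPl _) //; rewrite -ltnS prednK.
rewrite (minn_idPr _); last by rewrite (leq_trans _ hik) // leq_pred.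
rewrite onth_nseq ltn_sub2r //.
rewrite onthE (nth_map x) ?ha ?prednK //.
rewrite -ha /=.
by have := nth_last x (x :: s) => /= ->.
Qed.

Lemma comp_ext (w : nword Sigma) i : is_nword k' w -> i < k'' ->
  component (extend_word k'' w) i = component w (minn i k'.-1).
Proof.
elim: w => [|a w IH] //= /andP[/eqP ha hw] hi.
have := IH hw hi; rewrite /component /= => ->.
by rewrite onth_ext.
Qed.

Lemma unzip_ext (w : nword Sigma) : is_nword k' w ->
  unzip k'' (extend_word k'' w) =i unzip k' w.
Proof.
move=> hw t; apply/mapP/mapP => [[i]|[i]]; rewrite !mem_iota /= => hi ->.
  rewrite comp_ext //; exists (minn i k'.-1) => //.
  by rewrite mem_iota /= (leq_ltn_trans (geq_minr _ _)) // ltn_predL.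
exists i; first by rewrite mem_iota /= (ltn_trans hi).
by rewrite comp_ext ?(ltn_trans hi) // (minn_idPl _) // -ltnS prednK.
Qed.

Lemma bad_eqi (HS : hyperprop Sigma) T1 T2 : T1 =i T2 -> Bad HS T1 <-> Bad HS T2.
Proof.
move=> e; split=> hb T' hl; apply: hb => t ht; apply: hl;
  by [rewrite -e | rewrite e].
Qed.

End L.

Lemma undup_size_rel (A B C : eqType) (f : A -> B) (g : A -> C) (s : seq A) :
  {in s &, forall x y, (f x == f y) = (g x == g y)} ->
  size (undup (map f s)) = size (undup (map g s)).
Proof.
elim: s => [|x s IH] //= H.
have H' : {in s &, forall x y, (f x == f y) = (g x == g y)}.
  by move=> a b ha hb; apply: H; rewrite inE ?ha ?hb orbT.
have -> : (f x \in map f s) = (g x \in map g s).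
  apply/mapP/mapP => [[y hy /eqP e]|[y hy /eqP e]]; exists y => //; apply/eqP.
    by rewrite -H ?inE ?hy ?eqxx ?orbT.
  by rewrite H ?inE ?hy ?eqxx ?orbT.
by case: ifP => _ /=; rewrite IH.
Qed.

Theorem lemma6 (Sigma : finType) (HS : hyperprop Sigma) (k k' k'' : nat)
    (S E : seq (nword Sigma)) (Delta Delta' : nword Sigma -> bool) :
  0 < k' -> k' < k'' ->
  k_safety k HS ->
  obs_table HS k' S E Delta ->
  delta_def HS k'' ([::] :: [seq extend_word k'' s | s <- S])
                   ([::] :: [seq extend_word k'' e | e <- E]) Delta' ->
  card_rows Delta S E =
  card_rows Delta' ([::] :: [seq extend_word k'' s | s <- S])
                   ([::] :: [seq extend_word k'' e | e <- E]).
Proof.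
move=> k0 kk _ [[[Sne Sw Spre] [Ene Ew Esuf]] [D1 _]] [D1' _].
have eS : [::] \in S.
  have [s hs] : exists s, s \in S by case: (S) Sne => // s S' _; exists s; rewrite inE eqxx.
  by have := Spre s 0 hs; rewrite take0.
have eE : [::] \in E.
  have [e he] : exists e, e \in E by case: (E) Ene => // e E' _; exists e; rewrite inE eqxx.
  by have := Esuf e (size e) he; rewrite drop_size.
have key : forall s e, s \in S -> e \in E ->
    Delta' (extend_word k'' s ++ extend_word k'' e) = Delta (s ++ e).
  move=> s e hs he.
  have hw : is_nword k' (s ++ e) 
    by have := allP Sw s hs; have := allP Ew e he; rewrite /is_nword all_cat => -> ->.
  have H : Delta' (extend_word k'' s ++ extend_word k'' e) <-> Delta (s ++ e).
    have m1 : extend_word k'' s \in [::] :: [seq extend_word k'' s0 | s0 <- S].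
      by rewrite inE map_f ?orbT.
    have m2 : extend_word k'' e \in [::] :: [seq extend_word k'' e0 | e0 <- E].
      by rewrite inE map_f ?orbT.
    have H1 := D1' _ _ m1 m2.
    have H2 := D1 s e hs he.
    rewrite /extend_word -map_cat in H1.
    have H3 := bad_eqi HS (unzip_ext k0 kk hw).
    rewrite /extend_word in H3; rewrite /extend_word -map_cat; tauto.
  by apply/idP/idP => /H.
have rowE : forall s, s \in S ->
    row Delta' ([::] :: [seq extend_word k'' e | e <- E]) (extend_word k'' s)
    = Delta (s ++ [::]) :: row Delta E s.
  move=> s hs; rewrite /row /= -map_comp.
  rewrite -(key s [::]) //; congr (_ :: _).
  by apply/eq_in_map => e he /=; rewrite key.
have hdE : forall s, Delta (s ++ [::]) = nth false (row Delta E s) (index [::] E).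
  by move=> s; rewrite /row (nth_map [::]) ?index_mem // nth_index.
rewrite /card_rows map_cons /=.
have -> : row Delta' ([::] :: [seq extend_word k'' e | e <- E]) [::] \in
    [seq row Delta' ([::] :: [seq extend_word k'' e | e <- E]) i
       | i <- [seq extend_word k'' s | s <- S]].
  by rewrite -map_comp; apply/mapP; exists [::].
rewrite -map_comp; apply: undup_size_rel => s t hs ht.
have Hs := rowE s hs; have Ht := rowE t ht.
rewrite /row /= in Hs Ht; rewrite /row /= Hs Ht -/(row Delta E s) -/(row Delta E t) eqseq_cons.
case: eqP => [e|]; last by rewrite andbF.
by rewrite andbT !hdE e eqxx.
Qed.
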